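(* Let $G$ be a stochastic game with generalized-reachability objective $\mathcal T$ of dimension $n$. If $s\in S_\Box$ is a Maximizer state, then $\mathsf{exit}[\mathfrak A](\{s\})=\mathfrak A(s)$.
   Context: Stochastic game $G=(S,S_\Box,S_\circ,s_0,A,\mathrm{Av},\delta)$: finite state set $S$ partitioned into Maximizer states $S_\Box$ and Minimizer states $S_\circ$, initial state $s_0$, finite action set $A$, nonempty $\mathrm{Av}(s)$, transition distributions $\delta(s,a)$. Strategies history-dependent randomized; $\mathbb P^{\sigma,\tau}_s$ measure on infinite paths from $s$. Objective $\mathcal T=(T_1,\dots,T_n)$, $T_i\subseteq S$; $\mathfrak A(s)$ = set of $\vec v\in\mathbb R^n_{\ge0}$ such that some Maximizer strategy $\sigma$ gives $\mathbb P^{\sigma,\tau}_s(\Diamond T_i)\ge\vec v_i$ for all Minimizer strategies $\tau$ and all $i$. Geometry: $\mathit{dwc}(X)=\{y\in\mathbb R^n_{\ge0}\mid\exists x\in X:y\le x\}$; $\mathbf 1=\mathit{dwc}(\{\vec1\})$; $c\cdot X=\{cx\mid x\in X\}$; $X+Y$ Minkowski sum; $\mathrm{conv}$ convex hull. For $f:S\to2^{\mathbb R^n}$ and $a\in\mathrm{Av}(s)$: $f(s,a):=\big(\mathit{dwc}(\{\mathbb 1_{\mathcal T}(s)\})+\sum_{s'}\delta(s,a)(s')\cdot f(s')\big)\cap\mathbf 1$ where $\mathbb 1_{\mathcal T}(s)_i=1$ iff $s\in T_i$. $(s,a)$ exits $T\subseteq S$ if some successor $s'$ with $\delta(s,a)(s')>0$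 lies outside $T$; $\mathsf{Exits}(T)$ is the set of such pairs with $s\in T$, $a\in\mathrm{Av}(s)$. Best exit: $\mathsf{exit}[f](T):=\big(\mathit{dwc}(\{\sum_{s\in T}\mathbb 1_{\mathcal T}(s)\})+\mathrm{conv}(\bigcup_{(s,a)\in\mathsf{Exits}(T),\,s\in S_\Box}f(s,a))\big)\cap\mathbf 1$, with $\bigcup_\emptyset=\{\vec 0\}$. *)

(* Defs.v *)
From mathcomp Require Import all_boot all_order all_algebra.
From mathcomp Require Import boolp classical_sets reals.

Set Implicit Arguments.
Unset Strict Implicit.
Unset Printing Implicit Defensive.

Import Order.TTheory GRing.Theory Num.Theory.
Local Open Scope ring_scope.
Local Open Scope classical_set_scope.

(* A game is given by: R (reals), S (states), A (actions), Max (Maximizer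
   states; Minimizer states are the complement), Av (available actions),
   delta (transition distributions: delta s a s' = delta(s,a)(s')). *)

(* Histories: the sequence of past (state, action) pairs; the current state
   is passed separately.  A history from s is [::] with current state s. *)
Definition hist (S A : finType) := seq (S * A).

Definition strategy (R : realType) (S A : finType) := hist S A -> S -> A -> R.

Definition is_strategy (R : realType) (S A : finType) (Av : S -> {set A})
  (P : S -> bool) (st : strategy R S A) : Prop :=
  forall (h : hist S A) (c : S), P c ->
    (forall a, 0 <= st h c a) /\ (forall a, a \notin Av c -> st h c a = 0) /\
    \sum_a st h c a = 1.

Definition is_max_strategy R S A (Max : {set S}) (Av : S -> {set A}) st :=
  @is_strategy R S A Av (fun c => c \in Max) st.
Definition is_min_strategy R S A (Max : {set S}) (Av : S -> {set A}) st :=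
  @is_strategy R S A Av (fun c => c \notin Max) st.

Fixpoint reach_within (R : realType) (S A : finType) (Max : {set S})
  (delta : S -> A -> S -> R) (sg tau : strategy R S A) (T : {set S})
  (k : nat) (h : hist S A) (c : S) {struct k} : R :=
  match k with
  | 0 => if c \in T then 1 else 0
  | k'.+1 =>
      if c \in T then 1 else
      \sum_a ((if c \in Max then sg h c a else tau h c a) *
              \sum_s' (delta c a s' *
                       reach_within Max delta sg tau T k' (rcons h (c, a)) s'))
  end.

(* P^{sg,tau}_s(<> T): the probability of the event "eventually T" of the
   path measure, computed as the (monotone) limit = supremum of the
   probabilities of reaching T within k steps. *)
Definition reach_prob (R : realType) (S A : finType) (Max : {set S})
  (delta : S -> A -> S -> R) (sg tau : strategy R S A) (T : {set S}) (s : S) : R :=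
  sup (range (fun k : nat => reach_within Max delta sg tau T k [::] s)).

Definition vec (R : realType) (n : nat) := 'I_n -> R.

Definition achievable (R : realType) (S A : finType) (Max : {set S})
  (Av : S -> {set A}) (delta : S -> A -> S -> R) (n : nat)
  (Tobj : 'I_n -> {set S}) (s : S) : set (vec R n) :=
  [set v | (forall i, 0 <= v i) /\
     exists sg : strategy R S A, is_max_strategy Max Av sg /\
       forall tau : strategy R S A, is_min_strategy Max Av tau ->
         forall i, v i <= reach_prob Max delta sg tau (Tobj i) s].

Definition dwc (R : realType) (n : nat) (X : set (vec R n)) : set (vec R n) :=
  [set y | (forall i, 0 <= y i) /\ exists2 x, X x & forall i, y i <= x i].

Definition unit_box (R : realType) (n : nat) : set (vec R n) :=
  dwc [set (fun _ : 'I_n => (1 : R))].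

Definition msum (R : realType) (n : nat) (X Y : set (vec R n)) : set (vec R n) :=
  [set z | exists x y, X x /\ Y y /\ z = (fun i => x i + y i)].

Definition conv (R : realType) (n : nat) (X : set (vec R n)) : set (vec R n) :=
  [set x | exists (m : nat) (w : 'I_m -> R) (p : 'I_m -> vec R n),
     (forall j, 0 <= w j) /\ \sum_j w j = 1 /\ (forall j, X (p j)) /\
     x = (fun i => \sum_j w j * p j i)].

Definition ind_obj (R : realType) (S : finType) (n : nat)
  (Tobj : 'I_n -> {set S}) (s : S) : vec R n :=
  fun i => if s \in Tobj i then 1 else 0.

Definition succ_sum (R : realType) (S A : finType) (delta : S -> A -> S -> R)
  (n : nat) (f : S -> set (vec R n)) (s : S) (a : A) : set (vec R n) :=
  [set z | exists y : S -> vec R n, (forall s', f s' (y s')) /\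
     z = (fun i => \sum_s' delta s a s' * y s' i)].

Definition f_act (R : realType) (S A : finType) (delta : S -> A -> S -> R)
  (n : nat) (Tobj : 'I_n -> {set S}) (f : S -> set (vec R n)) (s : S) (a : A)
  : set (vec R n) :=
  msum (dwc [set ind_obj R Tobj s]) (succ_sum delta f s a) `&` @unit_box R n.

Definition exits (R : realType) (S A : finType) (Av : S -> {set A})
  (delta : S -> A -> S -> R) (C : {set S}) (s : S) (a : A) : bool :=
  [&& s \in C, a \in Av s & [exists s', (0 < delta s a s') && (s' \notin C)]].

Definition exit_union (R : realType) (S A : finType) (Max : {set S})
  (Av : S -> {set A}) (delta : S -> A -> S -> R) (n : nat)
  (Tobj : 'I_n -> {set S}) (f : S -> set (vec R n)) (C : {set S}) : set (vec R n) :=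
  if [exists s, exists a, exits Av delta C s a && (s \in Max)]
  then [set x | exists s a, exits Av delta C s a /\ s \in Max /\
                  f_act delta Tobj f s a x]
  else [set (fun _ : 'I_n => (0 : R))].

Definition best_exit (R : realType) (S A : finType) (Max : {set S})
  (Av : S -> {set A}) (delta : S -> A -> S -> R) (n : nat)
  (Tobj : 'I_n -> {set S}) (f : S -> set (vec R n)) (C : {set S}) : set (vec R n) :=
  msum (dwc [set (fun i => \sum_(s in C) ind_obj R Tobj s i)])
       (conv (exit_union Max Av delta Tobj f C))
  `&` @unit_box R n.

(* Main.v *)
Require Import Defs.
From mathcomp Require Import all_boot all_order all_algebra.
From mathcomp Require Import boolp classical_sets reals.
From mathcomp Require Import lra ring.
Import Order.TTheory GRing.Theory Num.Theory.
Local Open Scope ring_scope.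
Local Open Scope classical_set_scope.

Set Implicit Arguments.
Unset Strict Implicit.
Unset Printing Implicit Defensive.

Section Lsup.
Variable R : realType.
Implicit Types u v : nat -> R.

Definition ndec u := forall k, u k <= u k.+1.
Definition bnd u := exists M, forall k, u k <= M.

Lemma ndec_le u : ndec u -> forall k k', (k <= k')%N -> u k <= u k'.
Proof.
move=> hu k k' /subnKC <-; elim: (k' - k)%N => [|d IH]; first by rewrite addn0.
by rewrite addnS (le_trans IH).
Qed.

Lemma lsup_ub u k : bnd u -> u k <= sup (range u).
Proof.
move=> [M hM]; apply: ub_le_sup; last by exists k.
by exists M => _ [j _ <-].
Qed.

Lemma lsup_le u M : (forall k, u k <= M) -> sup (range u) <= M.
Proof. by move=> hM; apply: ge_sup; [exists (u 0%N), 0%N | move=> _ [j _ <-]]. Qed.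

Lemma lsup_gt u x : x < sup (range u) -> exists k, x < u k.
Proof.
move=> /sup_gt [|_ [k _ <-] h]; last by exists k.
by exists (u 0%N), 0%N.
Qed.

Lemma lsupD u v : ndec u -> ndec v -> bnd u -> bnd v ->
  sup (range (fun k => u k + v k)) = sup (range u) + sup (range v).
Proof.
move=> nu nv bu bv; apply/eqP; rewrite eq_le; apply/andP; split.
  by apply: lsup_le => k; apply: lerD; apply: lsup_ub.
have bw : bnd (fun k => u k + v k).
  by case: bu => M1 h1; case: bv => M2 h2; exists (M1 + M2) => k; apply: lerD.
apply/ler_addgt0Pr => e e0.
have e2 : 0 < e / 2 by rewrite divr_gt0.
have [k1 h1] := @lsup_gt u (sup (range u) - e / 2) ltac:(by rewrite ltrBlDr ltrDl).
have [k2 h2] := @lsup_gt v (sup (range v) - e / 2) ltac:(by rewrite ltrBlDr ltrDl).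
have := lsup_ub (maxn k1 k2) bw.
have := ndec_le nu (leq_maxl k1 k2); have := ndec_le nv (leq_maxr k1 k2).
move=> a b c.
have -> : e = e / 2 + e / 2 by rewrite -splitr.
lra.
Qed.

Lemma lsupZ u c : 0 <= c -> ndec u -> bnd u ->
  sup (range (fun k => c * u k)) = c * sup (range u).
Proof.
move=> c0 nu bu; have [->|cn0] := eqVneq c 0.
  rewrite mul0r; have -> : range (fun k => 0 * u k) = [set (0:R)].
    by apply/seteqP; split => [_ [k _ <-]|_ ->]; [rewrite mul0r|exists 0%N; rewrite ?mul0r].
  by rewrite sup1.
have cp : 0 < c by rewrite lt_def cn0.
have bw : bnd (fun k => c * u k).
  by case: bu => M h; exists (c * M) => k; rewrite ler_wpM2l.
apply/eqP; rewrite eq_le; apply/andP; split.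
  by apply: lsup_le => k; rewrite ler_wpM2l // lsup_ub.
rewrite -ler_pdivlMl //; apply: lsup_le => k.
by rewrite ler_pdivlMl // lsup_ub.
Qed.

Lemma lsup_mono u v : bnd v -> (forall k, u k <= v k) -> sup (range u) <= sup (range v).
Proof. by move=> bv h; apply: lsup_le => k; apply: le_trans (h k) (lsup_ub k bv). Qed.

Lemma lsup_ge0 u : bnd u -> (forall k, 0 <= u k) -> 0 <= sup (range u).
Proof. by move=> bu h; apply: le_trans (h 0%N) (lsup_ub 0%N bu). Qed.

Lemma lsup_sum (I : Type) (r : seq I) (P : pred I) (c : I -> R) (u : I -> nat -> R) :
  (forall j, P j -> 0 <= c j) -> (forall j, P j -> ndec (u j)) -> (forall j, P j -> bnd (u j)) ->
  sup (range (fun k => \sum_(j <- r | P j) c j * u j k)) = \sum_(j <- r | P j) c j * sup (range (u j)).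
Proof.
move=> c0 nu bu.
suff : [/\ ndec (fun k => \sum_(j <- r | P j) c j * u j k),
          bnd (fun k => \sum_(j <- r | P j) c j * u j k) &
  sup (range (fun k => \sum_(j <- r | P j) c j * u j k)) = \sum_(j <- r | P j) c j * sup (range (u j))].
  by case.
elim: r => [|j r [IH1 IH2 IH3]].
  rewrite big_nil; split.
  - by move=> k; rewrite !big_nil.
  - by exists 0 => k; rewrite big_nil.
  - have -> : range (fun k => \sum_(j <- [::] | P j) c j * u j k) = [set (0:R)].
      by apply/seteqP; split => [_ [k _ <-]|_ ->]; [rewrite big_nil|exists 0%N; rewrite ?big_nil].
    by rewrite sup1.
rewrite big_cons; case: ifP => Pj; last first.
  have -> : (fun k => \sum_(j0 <- j :: r | P j0) c j0 * u j0 k) = (fun k => \sum_(j0 <- r | P j0) c j0 * u j0 k).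
    by apply: funext => k; rewrite big_cons Pj.
  by [].
have n1 : ndec (fun k => c j * u j k) by move=> k; rewrite ler_wpM2l ?(c0 j Pj) //; apply: (nu j Pj).
have b1 : bnd (fun k => c j * u j k) by case: (bu j Pj) => M h; exists (c j * M) => k; rewrite ler_wpM2l ?(c0 j Pj).
have -> : (fun k => \sum_(j0 <- j :: r | P j0) c j0 * u j0 k) = (fun k => c j * u j k + \sum_(j0 <- r | P j0) c j0 * u j0 k).
  by apply: funext => k; rewrite big_cons Pj.
split.
- by move=> k; apply: lerD.
- by case: b1 => M1 h1; case: IH2 => M2 h2; exists (M1 + M2) => k; apply: lerD.
- by rewrite lsupD // IH3 lsupZ ?(c0 j Pj) //; [apply: nu | apply: bu].
Qed.

End Lsup.

Section Game.
Variables (R : realType) (S A : finType) (Max : {set S}) (Av : S -> {set A})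
  (delta : S -> A -> S -> R).
Hypothesis Hdelta : forall s a, a \in Av s ->
     (forall s', 0 <= delta s a s') /\ \sum_s' delta s a s' = 1.

Local Notation strat := (strategy R S A).
Local Notation reach := (reach_within Max delta).
Definition vmax (sg : strat) := is_max_strategy Max Av sg.
Definition vmin (tau : strat) := is_min_strategy Max Av tau.
Definition wt (sg tau : strat) h c a := if c \in Max then sg h c a else tau h c a.
Definition wok (c : S) (w : A -> R) :=
  [/\ forall a, 0 <= w a, forall a, a \notin Av c -> w a = 0 & \sum_a w a = 1].

Lemma wt_ok sg tau h c : vmax sg -> vmin tau -> wok c (wt sg tau h c).
Proof.
move=> hs ht; have [cM|cM] := boolP (c \in Max).
  have -> : wt sg tau h c = sg h c by apply: funext => a; rewrite /wt cM.
  by have [? [? ?]] := hs h c cM; split.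
have -> : wt sg tau h c = tau h c by apply: funext => a; rewrite /wt (negbTE cM).
by have [? [? ?]] := ht h c cM; split.
Qed.

Lemma wok_le1 c w a : wok c w -> w a <= 1.
Proof.
case=> w0 _ w1; rewrite -w1 (bigD1 a) //= lerDl; exact: sumr_ge0.
Qed.

Lemma reachS sg tau T k h c : reach sg tau T k.+1 h c =
  if c \in T then 1 else
  \sum_a wt sg tau h c a * \sum_s' delta c a s' * reach sg tau T k (rcons h (c, a)) s'.
Proof. by []. Qed.

Lemma wsum_le c w (f g : A -> S -> R) : wok c w ->
  (forall a s', a \in Av c -> f a s' <= g a s') ->
  \sum_a w a * \sum_s' delta c a s' * f a s' <= \sum_a w a * \sum_s' delta c a s' * g a s'.
Proof.
case=> w0 wout _ fg; apply: ler_sum => a _.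
have [aA|aA] := boolP (a \in Av c); last by rewrite wout // !mul0r.
rewrite ler_wpM2l //; apply: ler_sum => s' _.
by rewrite ler_wpM2l ?fg //; case: (Hdelta aA).
Qed.

Lemma wsum_const c w K : wok c w ->
  \sum_a w a * \sum_s' delta c a s' * K = K.
Proof.
case=> w0 wout w1; transitivity (\sum_a w a * K); last by rewrite -mulr_suml w1 mul1r.
apply: eq_bigr => a _; have [aA|aA] := boolP (a \in Av c); last by rewrite wout // !mul0r.
by rewrite -mulr_suml; case: (Hdelta aA) => _ ->; rewrite mul1r.
Qed.

Lemma reach01 sg tau T k h c : vmax sg -> vmin tau ->
  0 <= reach sg tau T k h c <= 1.
Proof.
move=> hs ht; elim: k h c => [|k IH] h c /=; first by case: (c \in T); rewrite /= ?lexx ?ler01.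
case: ifP => [_|_]; first by rewrite lexx ler01.
have W := wt_ok h c hs ht; apply/andP; split.
  rewrite -{1}(wsum_const 0 W).
  apply: (wsum_le (f := fun _ _ => 0) (g := fun a s' => reach sg tau T k (rcons h (c, a)) s')) => // a s' _.
  by case/andP: (IH (rcons h (c, a)) s').
rewrite -[X in _ <= X](wsum_const 1 W).
apply: (wsum_le (g := fun _ _ => 1) (f := fun a s' => reach sg tau T k (rcons h (c, a)) s')) => // a s' _.
by case/andP: (IH (rcons h (c, a)) s').
Qed.

Lemma reach_ge0 sg tau T k h c : vmax sg -> vmin tau -> 0 <= reach sg tau T k h c.
Proof. by move=> hs ht; case/andP: (reach01 T k h c hs ht). Qed.
Lemma reach_le1 sg tau T k h c : vmax sg -> vmin tau -> reach sg tau T k h c <= 1.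
Proof. by move=> hs ht; case/andP: (reach01 T k h c hs ht). Qed.

Lemma reach_ndec sg tau T k h c : vmax sg -> vmin tau ->
  reach sg tau T k h c <= reach sg tau T k.+1 h c.
Proof.
move=> hs ht; elim: k h c => [|k IH] h c.
  rewrite reachS; case: ifP => cT; first by rewrite /= cT.
  have -> : reach sg tau T 0 h c = 0 by rewrite /= cT.
  rewrite -[X in X <= _](wsum_const 0 (wt_ok h c hs ht)).
  apply: (wsum_le (f := fun _ _ => 0) (g := fun a s' => reach sg tau T 0 (rcons h (c, a)) s')) => [|a s' _]; first exact: wt_ok.
  exact: reach_ge0.
rewrite reachS [X in _ <= X]reachS; case: ifP => // _.
apply: (wsum_le (f := fun a s' => reach sg tau T k (rcons h (c, a)) s') (g := fun a s' => reach sg tau T k.+1 (rcons h (c, a)) s')) => [|a s' _]; [exact: wt_ok | exact: IH].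
Qed.

Lemma reach_mono sg tau T k k' h c : vmax sg -> vmin tau -> (k <= k')%N ->
  reach sg tau T k h c <= reach sg tau T k' h c.
Proof.
move=> hs ht; apply: (ndec_le (u := fun k => reach sg tau T k h c)) => j.
exact: reach_ndec.
Qed.

Local Notation rp := (reach_prob Max delta).

Lemma reach_le_rp sg tau T k c : vmax sg -> vmin tau ->
  reach sg tau T k [::] c <= rp sg tau T c.
Proof.
move=> hs ht; apply: (lsup_ub (u := fun k => reach sg tau T k [::] c)).
by exists 1 => j; apply: reach_le1.
Qed.

Lemma rp_le1 sg tau T c : vmax sg -> vmin tau -> rp sg tau T c <= 1.
Proof. by move=> hs ht; apply: lsup_le => k; apply: reach_le1. Qed.

Lemma rp_ge0 sg tau T c : vmax sg -> vmin tau -> 0 <= rp sg tau T c.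
Proof. by move=> hs ht; apply: le_trans (reach_le_rp T 0 c hs ht); apply: reach_ge0. Qed.

Lemma rp_in sg tau (T : {set S}) (c : S) : vmax sg -> vmin tau -> c \in T -> rp sg tau T c = 1.
Proof.
move=> hs ht cT; apply/eqP; rewrite eq_le rp_le1 //=.
by have := reach_le_rp T 0 c hs ht; rewrite /= cT.
Qed.

Definition shift (H : hist S A) (st : strat) : strat := fun g => st (H ++ g).

Lemma reach_shift sg tau T k H g c :
  reach sg tau T k (H ++ g) c = reach (shift H sg) (shift H tau) T k g c.
Proof.
elim: k g c => [|k IH] g c //=; case: ifP => // _.
by apply: eq_bigr => a _; congr (_ * _); apply: eq_bigr => s' _; rewrite rcons_cat IH.
Qed.

Lemma shift_vmax H sg : vmax sg -> vmax (shift H sg).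
Proof. by move=> hs g c; apply: hs. Qed.
Lemma shift_vmin H sg : vmin sg -> vmin (shift H sg).
Proof. by move=> hs g c; apply: hs. Qed.

Definition fs (g : hist S A) (c : S) := if g is p :: _ then p.1 else c.

Lemma fs_rcons g c a s' : fs (rcons g (c, a)) s' = fs g c.
Proof. by case: g. Qed.

Lemma reach_agree s0 sg1 sg2 tau1 tau2 T k g c :
  (forall g c, fs g c = s0 -> sg1 g c = sg2 g c) ->
  (forall g c, fs g c = s0 -> tau1 g c = tau2 g c) ->
  fs g c = s0 -> reach sg1 tau1 T k g c = reach sg2 tau2 T k g c.
Proof.
move=> e1 e2; elim: k g c => [|k IH] g c //= hf; case: ifP => // _.
rewrite (e1 _ _ hf) (e2 _ _ hf); apply: eq_bigr => a _; congr (_ * _).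
by apply: eq_bigr => s' _; rewrite IH // fs_rcons.
Qed.

(* probability of the Maximizer's own choices along a history *)
Fixpoint PfA (sg : strat) (H g : hist S A) : R :=
  match g with
  | [::] => 1
  | p :: g' => (if p.1 \in Max then sg H p.1 p.2 else 1) * PfA sg (rcons H p) g'
  end.

Lemma PfA_cat sg H g1 g2 : PfA sg H (g1 ++ g2) = PfA sg H g1 * PfA sg (H ++ g1) g2.
Proof.
elim: g1 H => [|p g1 IH] H /=; first by rewrite mul1r cats0.
by rewrite IH mulrA cat_rcons.
Qed.

Lemma PfA_rcons sg H g p : PfA sg H (rcons g p) =
  PfA sg H g * (if p.1 \in Max then sg (H ++ g) p.1 p.2 else 1).
Proof. by rewrite -cats1 PfA_cat /= mulr1. Qed.

Lemma PfA01 sg H g : vmax sg -> 0 <= PfA sg H g <= 1.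
Proof.
move=> hs; elim: g H => [|p g IH] H /=; first by rewrite ler01 lexx.
have /andP [l0 l1] : 0 <= (if p.1 \in Max then sg H p.1 p.2 else 1) <= 1.
  case: ifP => pM; last by rewrite ler01 lexx.
  have W : wok p.1 (sg H p.1) by have [? [? ?]] := hs H p.1 pM; split.
  by have := W; case=> w0 _ _; rewrite w0 /= (wok_le1 _ W).
case/andP: (IH (rcons H p)) => a b.
by rewrite mulr_ge0 //= mulr_ile1.
Qed.

Lemma PfA_ge0 sg H g : vmax sg -> 0 <= PfA sg H g.
Proof. by move=> hs; case/andP: (PfA01 H g hs). Qed.
Lemma PfA_le1 sg H g : vmax sg -> PfA sg H g <= 1.
Proof. by move=> hs; case/andP: (PfA01 H g hs). Qed.



Lemma sum_Av (c : S) (f : A -> R) : (forall a, a \notin Av c -> f a = 0) ->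
  \sum_a f a = \sum_(a in Av c) f a.
Proof.
move=> h; rewrite [RHS]big_mkcond /=; apply: eq_bigr => a _.
by case: ifP => // /negbT /h.
Qed.

Section Kuhn.
Variables (I : Type) (sgx : I -> strat) (Hx : I -> hist S A) (Lf : (I -> R) -> R)
  (dflt : strat).
Definition Wt x := PfA (sgx x) [::] (Hx x).
Definition adm (F : I -> R) :=
  (forall x, 0 <= F x) /\ exists C, 0 <= C /\ forall x, F x <= C * Wt x.
Hypothesis hsg : forall x, vmax (sgx x).
Hypothesis hdf : vmax dflt.
Hypothesis Ladd : forall F G, adm F -> adm G -> Lf (fun x => F x + G x) = Lf F + Lf G.
Hypothesis LZ : forall F c, adm F -> 0 <= c -> Lf (fun x => c * F x) = c * Lf F.
Hypothesis Lmono : forall F G, adm F -> adm G -> (forall x, F x <= G x) -> Lf F <= Lf G.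
Hypothesis L0 : Lf (fun _ => 0) = 0.

Lemma adm0 : adm (fun _ => 0).
Proof. by split => // ; exists 0; split => // x; rewrite mul0r. Qed.

Lemma admD F G : adm F -> adm G -> adm (fun x => F x + G x).
Proof.
move=> [F0 [C1 [C10 h1]]] [G0 [C2 [C20 h2]]]; split => [x|]; first by rewrite addr_ge0.
by exists (C1 + C2); split => [|x]; [rewrite addr_ge0 | rewrite mulrDl lerD].
Qed.

Lemma admZ F c : adm F -> 0 <= c -> adm (fun x => c * F x).
Proof.
move=> [F0 [C1 [C10 h1]]] c0; split => [x|]; first by rewrite mulr_ge0.
by exists (c * C1); split => [|x]; [rewrite mulr_ge0 | rewrite -mulrA ler_wpM2l].
Qed.

Lemma Lf_ge0 F : adm F -> 0 <= Lf F.
Proof. by move=> hF; rewrite -L0; apply: Lmono => //; [exact: adm0 | case: hF]. Qed.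

Lemma Lsum (J : Type) (r : seq J) (P : pred J) (F : J -> I -> R) :
  (forall j, P j -> adm (F j)) ->
  adm (fun x => \sum_(j <- r | P j) F j x) /\
  Lf (fun x => \sum_(j <- r | P j) F j x) = \sum_(j <- r | P j) Lf (F j).
Proof.
move=> hF; elim: r => [|j r [IH1 IH2]].
  have -> : (fun x : I => \sum_(j <- [::] | P j) F j x) = (fun _ => 0).
    by apply: funext => x; rewrite big_nil.
  by rewrite big_nil; split; [exact: adm0 | exact: L0].
rewrite big_cons; case: ifP => Pj.
  have -> : (fun x => \sum_(j0 <- j :: r | P j0) F j0 x) = (fun x => F j x + \sum_(j0 <- r | P j0) F j0 x).
    by apply: funext => x; rewrite big_cons Pj.
  by split; [exact: admD (hF j Pj) IH1 | rewrite Ladd; [rewrite IH2 | exact: hF | exact: IH1]].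
have -> : (fun x => \sum_(j0 <- j :: r | P j0) F j0 x) = (fun x => \sum_(j0 <- r | P j0) F j0 x).
  by apply: funext => x; rewrite big_cons Pj.
by split.
Qed.

Definition Dk g := Lf (fun x => PfA (sgx x) [::] (Hx x ++ g)).
Definition xi : strat := fun g c b =>
  if Dk g == 0 then dflt g c b else Dk (rcons g (c, b)) / Dk g.

Lemma Pf_le_Wt x g : PfA (sgx x) [::] (Hx x ++ g) <= Wt x.
Proof.
rewrite PfA_cat /Wt -[X in _ <= X]mulr1 ler_wpM2l ?PfA_ge0 //.
exact: PfA_le1.
Qed.

Lemma adm_Pf g (r : I -> R) : (forall x, 0 <= r x <= 1) ->
  adm (fun x => PfA (sgx x) [::] (Hx x ++ g) * r x).
Proof.
move=> hr; split => [x|].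
  by case/andP: (hr x) => r0 _; rewrite mulr_ge0 // PfA_ge0.
exists 1; split => // x; rewrite mul1r; apply: le_trans (Pf_le_Wt x g).
case/andP: (hr x) => r0 r1; rewrite -[X in _ <= X]mulr1 ler_wpM2l ?PfA_ge0 //.
Qed.

Lemma adm_P g : adm (fun x => PfA (sgx x) [::] (Hx x ++ g)).
Proof.
have := @adm_Pf g (fun _ => 1) (fun _ => ltac:(by rewrite ler01 lexx)).
by under eq_fun do rewrite mulr1.
Qed.

Lemma Dk_ge0 g : 0 <= Dk g.
Proof. exact/Lf_ge0/adm_P. Qed.

Lemma Pf_rcons_max x g c a : c \in Max ->
  PfA (sgx x) [::] (Hx x ++ rcons g (c, a)) = PfA (sgx x) [::] (Hx x ++ g) * sgx x (Hx x ++ g) c a.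
Proof. by move=> cM; rewrite -rcons_cat PfA_rcons /= cM. Qed.

Lemma Pf_rcons_min x g c a : c \notin Max ->
  PfA (sgx x) [::] (Hx x ++ rcons g (c, a)) = PfA (sgx x) [::] (Hx x ++ g).
Proof. by move=> cM; rewrite -rcons_cat PfA_rcons /= (negbTE cM) mulr1. Qed.

Lemma sg01 x h c a : c \in Max -> 0 <= sgx x h c a <= 1.
Proof.
move=> cM; have W : wok c (sgx x h c) by have [? [? ?]] := @hsg x h c cM; split.
by have := W; case=> w0 _ _; rewrite w0 /= (wok_le1 _ W).
Qed.
Arguments sg01 : clear implicits.

Lemma Dk_rcons_max g c : c \in Max ->
  \sum_b Dk (rcons g (c, b)) = Dk g /\ forall b, b \notin Av c -> Dk (rcons g (c, b)) = 0.
Proof.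
move=> cM; split.
  have [_ LL] := @Lsum _ (index_enum A) xpredT
     (fun b x => PfA (sgx x) [::] (Hx x ++ g) * sgx x (Hx x ++ g) c b)
     (fun b _ => adm_Pf g (fun x => sg01 x (Hx x ++ g) c b cM)).
  transitivity (\sum_b Lf (fun x => PfA (sgx x) [::] (Hx x ++ g) * sgx x (Hx x ++ g) c b)).
    by apply: eq_bigr => b _; rewrite /Dk; congr Lf; apply: funext => x; exact: Pf_rcons_max.
  rewrite -LL /Dk; congr Lf; apply: funext => x.
  by rewrite -mulr_sumr; have [? [? ->]] := @hsg x (Hx x ++ g) c cM; rewrite mulr1.
move=> b bA; rewrite /Dk -L0; congr Lf; apply: funext => x.
by rewrite Pf_rcons_max //; have [? [-> //]] := @hsg x (Hx x ++ g) c cM; rewrite mulr0.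
Qed.

Lemma xi_vmax : vmax xi.
Proof.
move=> g c cM; rewrite /xi; case: eqP => D0; first exact: hdf.
have [Dsum Dout] := Dk_rcons_max g cM.
split; first by move=> a; rewrite divr_ge0 ?Dk_ge0.
split; first by move=> a /Dout ->; rewrite mul0r.
by rewrite -mulr_suml Dsum divff //; apply/eqP.
Qed.

Lemma Dk_rcons_le g c a : c \in Max -> Dk (rcons g (c, a)) <= Dk g.
Proof.
move=> cM; rewrite /Dk; apply: Lmono; first exact: (adm_P (rcons g (c, a))).
  exact: adm_P.
move=> x; rewrite Pf_rcons_max // -[X in _ <= X]mulr1 ler_wpM2l ?PfA_ge0 //.
by case/andP: (sg01 x (Hx x ++ g) c a cM).
Qed.

Lemma KD tau' g c a : Dk g * wt xi tau' g c a =
  Dk (rcons g (c, a)) * (if c \in Max then 1 else tau' g c a).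
Proof.
rewrite /wt; case: ifP => cM.
  rewrite /xi mulr1; case: eqP => D0.
    rewrite D0 mul0r; apply/eqP; rewrite eq_le Dk_ge0 /=.
    by rewrite -D0 Dk_rcons_le.
  by rewrite mulrC divfK //; apply/eqP.
have -> : Dk (rcons g (c, a)) = Dk g.
  by rewrite /Dk; congr Lf; apply: funext => x; rewrite Pf_rcons_min // cM.
by [].
Qed.

Theorem kuhn (tau' : strat) (taux : I -> strat) T :
  vmin tau' -> (forall x, vmin (taux x)) ->
  (forall x g, taux x (Hx x ++ g) = tau' g) ->
  forall k g c, Dk g * reach xi tau' T k g c =
    Lf (fun x => PfA (sgx x) [::] (Hx x ++ g) * reach (sgx x) (taux x) T k (Hx x ++ g) c).
Proof.
move=> ht htx hglue; elim=> [|k IH] g c.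
  rewrite /=; case: ifP => _.
    by rewrite mulr1; congr Lf; apply: funext => x; rewrite mulr1.
  by rewrite mulr0 -{1}L0; congr Lf; apply: funext => x; rewrite mulr0.
have [cT|cT] := boolP (c \in T).
  rewrite reachS cT mulr1 /Dk; congr Lf; apply: funext => x.
  by rewrite reachS cT mulr1.
pose G a s' x := PfA (sgx x) [::] (Hx x ++ rcons g (c, a)) *
                 reach (sgx x) (taux x) T k (Hx x ++ rcons g (c, a)) s'.
have admG a s' : adm (G a s').
  apply: adm_Pf => x; apply/andP; split; [exact: reach_ge0 | exact: reach_le1].
pose coef a s' := delta c a s' * (if c \in Max then 1 else tau' g c a).
have coef0 a s' : a \in Av c -> 0 <= coef a s'.
  move=> aA; rewrite /coef mulr_ge0 //; first by case: (Hdelta aA).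
  by case: ifP => cM; [exact: ler01 | case: (ht g c (negbT cM))].
have Eint : (fun x => PfA (sgx x) [::] (Hx x ++ g) *
      reach (sgx x) (taux x) T k.+1 (Hx x ++ g) c) =
    (fun x => \sum_(a in Av c) \sum_s' coef a s' * G a s' x).
  apply: funext => x; rewrite reachS (negbTE cT) mulr_sumr.
  rewrite (@sum_Av c); last first.
    move=> a aA; rewrite /wt; case: ifP => cM.
      by have [? [-> //]] := @hsg x (Hx x ++ g) c cM; rewrite mul0r mulr0.
    by have [? [-> //]] := htx x (Hx x ++ g) c (negbT cM); rewrite mul0r mulr0.
  apply: eq_bigr => a aA; rewrite mulr_sumr mulr_sumr; apply: eq_bigr => s' _.
  rewrite /G /coef /wt rcons_cat; case: ifP => cM.
    by rewrite Pf_rcons_max // mulr1; ring.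
  rewrite Pf_rcons_min; last by rewrite cM.
  rewrite hglue; ring.
rewrite Eint.
have admI a : a \in Av c -> adm (fun x => \sum_s' coef a s' * G a s' x).
  move=> aA; have [h1 _] := @Lsum _ (index_enum S) xpredT (fun s' x => coef a s' * G a s' x)
     (fun s' _ => admZ (admG a s') (coef0 a s' aA)).
  exact: h1.
have [_ ->] := @Lsum _ (index_enum A) (mem (Av c))
   (fun a x => \sum_s' coef a s' * G a s' x) admI.
rewrite reachS (negbTE cT) mulr_sumr (@sum_Av c); last first.
  move=> a aA; rewrite mulrA KD; case: ifP => cM.
    by have [_ ->] := Dk_rcons_max g cM; rewrite ?mul0r.
  by have [_ [-> //]] := ht g c (negbT cM); rewrite mulr0 mul0r.
apply: eq_bigr => a aA.
have [_ ->] := @Lsum _ (index_enum S) xpredT (fun s' x => coef a s' * G a s' x)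
     (fun s' _ => admZ (admG a s') (coef0 a s' aA)).
rewrite mulrA KD mulr_sumr; apply: eq_bigr => s' _.
rewrite LZ ?admG ?coef0 // /G -IH /coef; ring.
Qed.

End Kuhn.

Lemma mix_fin m (w : 'I_m -> R) (rho : 'I_m -> strat) d0 :
  (forall j, 0 <= w j) -> \sum_j w j = 1 -> (forall j, vmax (rho j)) -> vmax d0 ->
  exists xi0, vmax xi0 /\ forall tau T k c, vmin tau ->
    reach xi0 tau T k [::] c = \sum_j w j * reach (rho j) tau T k [::] c.
Proof.
move=> w0 w1 hr hd.
pose Lf (F : 'I_m -> R) := \sum_j w j * F j.
have Ladd F G : Lf (fun x => F x + G x) = Lf F + Lf G.
  by rewrite /Lf -big_split; apply: eq_bigr => j _; rewrite mulrDr.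
have LZ F c : Lf (fun x => c * F x) = c * Lf F.
  by rewrite /Lf mulr_sumr; apply: eq_bigr => j _; rewrite mulrCA.
have Lmono F G : (forall x, F x <= G x) -> Lf F <= Lf G.
  by move=> h; apply: ler_sum => j _; rewrite ler_wpM2l.
have L0 : Lf (fun _ => 0) = 0 by rewrite /Lf big1 // => j _; rewrite mulr0.
exists (xi rho (fun _ => [::]) Lf d0); split.
  by apply: xi_vmax => // F G *; apply: Lmono.
move=> tau T k c ht.
have := @kuhn _ rho (fun _ => [::]) Lf d0 hr (fun F G _ _ => Ladd F G)
  (fun F c _ _ => LZ F c) (fun F G _ _ => Lmono F G) L0 tau (fun _ => tau) T ht (fun _ => ht)
  (fun _ _ => erefl) k [::] c.
have -> : Dk rho (fun _ => [::]) Lf [::] = 1.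
  by rewrite /Dk /Lf -w1; apply: eq_bigr => j _; rewrite /= mulr1.
by rewrite mul1r => ->; apply: eq_bigr => j _; rewrite /= mul1r.
Qed.

Definition dstrat (HAv : forall s, exists a, a \in Av s) : strat :=
  fun _ c a => if a == xchoose (HAv c) then 1 else 0.

Lemma dstrat_ok HAv (P : S -> bool) : is_strategy Av P (dstrat HAv).
Proof.
move=> h c _; rewrite /dstrat; split; first by move=> a; case: ifP; rewrite ?ler01 ?lexx.
split.
  move=> a aA; case: eqP => // ea; have := xchooseP (HAv c).
  by rewrite -ea /= (negbTE aA).
rewrite (bigD1 (xchoose (HAv c))) //= eqxx big1 ?addr0 // => a /negbTE -> //.
Qed.


Section Loop.
Variables (s : S).
Hypothesis sMax : s \in Max.

Definition Ex (b : A) := exits Av delta [set s] s b.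
Definition Lp (b : A) := (b \in Av s) && ~~ Ex b.

Lemma Ex_Av b : Ex b -> b \in Av s.
Proof. by case/and3P. Qed.

Lemma split_EL (F : A -> R) : (forall b, b \notin Av s -> F b = 0) ->
  \sum_b F b = \sum_(b | Ex b) F b + \sum_(b | Lp b) F b.
Proof.
move=> h; rewrite (bigID Ex) /=; congr (_ + _).
rewrite [RHS]big_mkcond [LHS]big_mkcond; apply: eq_bigr => b _.
rewrite /Lp; case: (Ex b); rewrite ?andbF ?andbT //; case: ifP => // /negbT; exact: h.
Qed.

Lemma Lp_delta b s' : Lp b -> delta s b s' = (s' == s)%:R.
Proof.
case/andP => bA nE; have [d0 d1] := Hdelta bA.
have z s2 : s2 != s -> delta s b s2 = 0.
  move=> ne; apply/eqP; rewrite eq_le d0 andbT leNgt; apply/negP => pos.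
  move: nE; rewrite /Ex /exits inE eqxx bA /=; apply/negP/negPn.
  by apply/existsP; exists s2; rewrite pos inE.
case: eqP => [->|/eqP ne]; last exact: z.
move: d1; rewrite (bigD1 s) //= big1 ?addr0 // => s2; exact: z.
Qed.

Lemma sum_point b (f : S -> R) : Lp b -> \sum_s' delta s b s' * f s' = f s.
Proof.
move=> Lb; rewrite (bigD1 s) //= big1 ?addr0; first by rewrite Lp_delta // eqxx mul1r.
by move=> s2 ne; rewrite Lp_delta // (negbTE ne) mul0r.
Qed.

Fixpoint allseq (t : nat) : seq (seq A) :=
  if t is t'.+1 then flatten [seq [seq rcons x b | b <- enum Lp] | x <- allseq t']
  else [:: [::]].

Lemma sum_allseqS t (F : seq A -> R) :
  \sum_(x <- allseq t.+1) F x = \sum_(x <- allseq t) \sum_(b | Lp b) F (rcons x b).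
Proof.
rewrite /= big_flatten /= big_map; apply: eq_bigr => x _.
by rewrite big_map big_enum.
Qed.

Lemma eq_allseq t (F1 F2 : seq A -> R) : (forall x, all Lp x -> F1 x = F2 x) ->
  \sum_(x <- allseq t) F1 x = \sum_(x <- allseq t) F2 x.
Proof.
elim: t F1 F2 => [|t IH] F1 F2 h; first by rewrite !big_cons !big_nil h.
rewrite !sum_allseqS; apply: IH => x ax; apply: eq_bigr => b Lb.
by apply: h; rewrite all_rcons Lb.
Qed.

Definition hx (x : seq A) : hist S A := map (pair s) x.

Lemma hx_rcons x b : hx (rcons x b) = rcons (hx x) (s, b).
Proof. by rewrite /hx map_rcons. Qed.

Variable sg : strat.
Hypothesis hsg : vmax sg.

Lemma Pf_step g b : PfA sg [::] (rcons g (s, b)) = PfA sg [::] g * sg g s b.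
Proof. by rewrite PfA_rcons /= sMax. Qed.

Lemma sg_out g b : b \notin Av s -> sg g s b = 0.
Proof. by move=> bA; have [_ [-> //]] := hsg g sMax. Qed.

Lemma sg_sum g : \sum_b sg g s b = 1.
Proof. by have [_ [_ ->]] := hsg g sMax. Qed.

Lemma sg_ge0 g b : 0 <= sg g s b.
Proof. by have [-> _] := hsg g sMax. Qed.

Definition Qs t := \sum_(x <- allseq t) PfA sg [::] (hx x).
Definition es t := \sum_(x <- allseq t) \sum_(b | Ex b) PfA sg [::] (hx x ++ [:: (s, b)]).

Lemma Qs_step t : Qs t = es t + Qs t.+1.
Proof.
rewrite /Qs /es sum_allseqS -big_split /=; apply: eq_bigr => x _.
transitivity (\sum_b PfA sg [::] (rcons (hx x) (s, b))).
  by rewrite -[LHS]mulr1 -(sg_sum (hx x)) mulr_sumr; apply: eq_bigr => b _; rewrite Pf_step.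
rewrite (@split_EL (fun b => PfA sg [::] (rcons (hx x) (s, b)))); last first.
  by move=> b bA; rewrite Pf_step sg_out // mulr0.
by congr (_ + _); apply: eq_bigr => b _; rewrite ?cats1 // hx_rcons.
Qed.

Lemma Qs_ge0 t : 0 <= Qs t.
Proof. by apply: sumr_ge0 => x _; apply: PfA_ge0. Qed.

Lemma es_sum K : \sum_(t < K) es t + Qs K = 1.
Proof.
elim: K => [|K IH]; first by rewrite big_ord0 add0r /Qs /= big_cons big_nil addr0.
by rewrite big_ord_recr /= -addrA -Qs_step.
Qed.

Lemma es_le1 K : \sum_(t < K) es t <= 1.
Proof. by rewrite -(es_sum K) lerDl Qs_ge0. Qed.

Definition PS (F : seq A -> R) K := \sum_(t < K) \sum_(x <- allseq t) F x.

Section Unfold.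
Variables (tau : strat) (T : {set S}).
Hypothesis htau : vmin tau.
Hypothesis sT : s \notin T.

Definition Rt t j := \sum_(x <- allseq t) PfA sg [::] (hx x) * reach sg tau T j (hx x) s.
Definition Et t j := \sum_(x <- allseq t) \sum_(b | Ex b)
   PfA sg [::] (hx x ++ [:: (s, b)]) * \sum_s' delta s b s' * reach sg tau T j (hx x ++ [:: (s, b)]) s'.

Lemma Rt_step t j : Rt t j.+1 = Et t j + Rt t.+1 j.
Proof.
rewrite /Rt /Et sum_allseqS -big_split; apply: eq_bigr => x _.
rewrite reachS (negbTE sT) /wt sMax mulr_sumr.
rewrite (@split_EL (fun b => PfA sg [::] (hx x) * (sg (hx x) s b *
   \sum_s' delta s b s' * reach sg tau T j (rcons (hx x) (s, b)) s'))); last first.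
  by move=> b bA; rewrite sg_out // mul0r mulr0.
congr (_ + _); apply: eq_bigr => b Lb.
  by rewrite cats1 Pf_step mulrA.
by rewrite sum_point // hx_rcons Pf_step mulrA.
Qed.

Lemma Et_mono t j K : (j <= K)%N -> Et t j <= Et t K.
Proof.
move=> jK; apply: ler_sum => x _; apply: ler_sum => b Eb.
rewrite ler_wpM2l ?PfA_ge0 //; apply: ler_sum => s' _.
rewrite ler_wpM2l ?reach_mono //; by case: (Hdelta (Ex_Av Eb)).
Qed.

Lemma Rt_bound K j t : (j <= K)%N -> Rt t j <= \sum_(i < j) Et (t + i) K.
Proof.
elim: j t => [|j IH] t jK.
  rewrite big_ord0 /Rt big1_seq // => x _ /=; rewrite (negbTE sT) mulr0 //.
rewrite Rt_step big_ord_recl addn0; apply: lerD; first by apply: Et_mono; exact: ltnW.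
apply: le_trans (IH t.+1 (ltnW jK)) _; apply: ler_sum => i _.
by rewrite lift0 addSnnS.
Qed.

Definition Fr b s' K x :=
  PfA sg [::] (hx x ++ [:: (s, b)]) * reach sg tau T K (hx x ++ [:: (s, b)]) s'.

Lemma loop_bound K : reach sg tau T K [::] s <=
  \sum_(b | Ex b) \sum_s' delta s b s' * PS (Fr b s' K) K.
Proof.
have := @Rt_bound K K 0 (leqnn K).
rewrite /Rt /= big_cons big_nil addr0 mul1r => h; apply: le_trans h _.
rewrite le_eqVlt; apply/orP; left; apply/eqP.
under eq_bigr do rewrite add0n.
rewrite /Et /PS /Fr.
pose G b s' x := delta s b s' * (PfA sg [::] (hx x ++ [:: (s, b)]) *
   reach sg tau T K (hx x ++ [:: (s, b)]) s').
transitivity (\sum_(i < K) \sum_(b | Ex b) \sum_(x <- allseq i) \sum_s' G b s' x).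
  apply: eq_bigr => i _; rewrite exchange_big; apply: eq_bigr => b Eb.
  apply: eq_bigr => x _; rewrite mulr_sumr; apply: eq_bigr => s' _; rewrite /G; ring.
rewrite exchange_big; apply: eq_bigr => b Eb.
transitivity (\sum_(i < K) \sum_s' \sum_(x <- allseq i) G b s' x).
  by apply: eq_bigr => i _; rewrite exchange_big.
rewrite exchange_big; apply: eq_bigr => s' _; rewrite mulr_sumr; apply: eq_bigr => i _.
by rewrite mulr_sumr.
Qed.

End Unfold.

Definition Hb b x : hist S A := hx (filter Lp x) ++ [:: (s, b)].
Definition csum (F : seq A -> R) := sup (range (PS F)).

Lemma PS_ge0 F K : (forall x, 0 <= F x) -> 0 <= PS F K.
Proof. by move=> h; apply: sumr_ge0 => t _; apply: sumr_ge0 => x _. Qed.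

Lemma PS_ndec F : (forall x, 0 <= F x) -> ndec (PS F).
Proof. by move=> h K; rewrite /PS big_ord_recr /= lerDl sumr_ge0. Qed.

Lemma PS_Wt_le1 b K : Ex b -> PS (fun x => PfA sg [::] (Hb b x)) K <= 1.
Proof.
move=> Eb; apply: le_trans (es_le1 K); apply: ler_sum => t _.
rewrite /es; rewrite (@eq_allseq t (fun x => PfA sg [::] (Hb b x))
   (fun x => PfA sg [::] (hx x ++ [:: (s, b)]))); last first.
  by move=> x /all_filterP ax; rewrite /Hb ax.
apply: ler_sum => x _; rewrite (bigD1 b) //= lerDl; apply: sumr_ge0 => *; exact: PfA_ge0.
Qed.

Section CS.
Variable b : A.
Hypothesis Eb : Ex b.
Local Notation admb := (@adm _ (fun _ => sg) (Hb b)).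

Lemma admb_ndec F : admb F -> ndec (PS F).
Proof. by case=> h _; exact: PS_ndec. Qed.

Lemma admb_bnd F : admb F -> bnd (PS F).
Proof.
case=> h [C [C0 hC]]; exists C => K.
apply: le_trans (_ : C * PS (fun x => PfA sg [::] (Hb b x)) K <= C).
  rewrite /PS mulr_sumr; apply: ler_sum => t _; rewrite mulr_sumr; apply: ler_sum => x _.
  exact: hC.
by rewrite -[X in _ <= X]mulr1 ler_wpM2l // PS_Wt_le1.
Qed.

Lemma csumD F G : admb F -> admb G -> csum (fun x => F x + G x) = csum F + csum G.
Proof.
move=> hF hG; rewrite /csum (_ : PS (fun x => F x + G x) = (fun K => PS F K + PS G K)).
  exact: (lsupD (admb_ndec hF) (admb_ndec hG) (admb_bnd hF) (admb_bnd hG)).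
by apply: funext => K; rewrite /PS -big_split; apply: eq_bigr => t _; rewrite big_split.
Qed.

Lemma csumZ F c : admb F -> 0 <= c -> csum (fun x => c * F x) = c * csum F.
Proof.
move=> hF c0; rewrite /csum (_ : PS (fun x => c * F x) = (fun K => c * PS F K)).
  exact: (lsupZ c0 (admb_ndec hF) (admb_bnd hF)).
by apply: funext => K; rewrite /PS mulr_sumr; apply: eq_bigr => t _; rewrite mulr_sumr.
Qed.

Lemma csum_mono F G : admb F -> admb G -> (forall x, F x <= G x) -> csum F <= csum G.
Proof.
move=> hF hG h; apply: lsup_mono; first exact: admb_bnd.
by move=> K; apply: ler_sum => t _; apply: ler_sum => x _.
Qed.

Lemma csum0 : csum (fun _ => 0) = 0.
Proof.
have P0 : PS (fun _ => 0) = (fun _ => 0).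
  by apply: funext => K; rewrite /PS big1 // => t _; rewrite big1.
rewrite /csum P0; apply/eqP; rewrite eq_le; apply/andP; split.
  by apply: lsup_le.
by apply: lsup_ge0 => //; exists 0.
Qed.

Lemma PS_le_csum F K : admb F -> PS F K <= csum F.
Proof. by move=> hF; apply: lsup_ub; exact: admb_bnd. Qed.

Definition xib := xi (fun _ => sg) (Hb b) csum sg.
Definition Wb := Dk (fun _ => sg) (Hb b) csum [::].

Lemma xib_vmax : vmax xib.
Proof.
exact: (xi_vmax (fun _ => hsg) hsg csumD csum_mono csum0).
Qed.

Lemma Wb_ge0 : 0 <= Wb.
Proof. apply: Dk_ge0; [move=> _; exact: hsg | exact: csum_mono | exact: csum0]. Qed.

Lemma kuhn_b tau tb T K s' : vmin tau -> vmin tb ->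
  (forall x g, tau (Hb b x ++ g) = tb g) ->
  PS (fun x => PfA sg [::] (hx x ++ [:: (s, b)]) * reach sg tau T K (hx x ++ [:: (s, b)]) s') K
  <= Wb * reach xib tb T K [::] s'.
Proof.
move=> ht htb hg.
have := @kuhn _ (fun _ => sg) (Hb b) csum sg (fun _ => hsg) csumD (fun F c hF hc => csumZ hF hc) csum_mono csum0
  tb (fun _ => tau) T htb (fun _ => ht) hg K [::] s'.
rewrite /Wb /xib => ->.
apply: le_trans (PS_le_csum K _); last first.
  apply: adm_Pf => [x|x]; first exact: hsg.
  by rewrite reach_ge0 ?reach_le1.
rewrite le_eqVlt; apply/orP; left; apply/eqP; apply: eq_bigr => t _.
by apply: eq_allseq => x /all_filterP ax; rewrite /Hb ax cats0.
Qed.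

End CS.

End Loop.

Fixpoint gl (s : S) (h : hist S A) : option (A * hist S A) :=
  if h is (c, a) :: h' then
    (if (c == s) && Lp s a then gl s h' else Some (a, h'))
  else None.

Definition glue (s : S) (tb : A -> strat) (t0 : strat) : strat := fun h =>
  if gl s h is Some (b, g) then tb b g else t0 h.

Lemma gl_Hb s b x g : Ex s b -> gl s (Hb s b x ++ g) = Some (b, g).
Proof.
move=> Eb; rewrite /Hb -catA /=; elim: x => [|a x IH] /=.
  by rewrite eqxx /Lp Eb andbF.
by case: ifP => La //=; rewrite eqxx La.
Qed.

Lemma glue_vmin s tb t0 : (forall b, vmin (tb b)) -> vmin t0 -> vmin (glue s tb t0).
Proof. by move=> h1 h0 h c; rewrite /glue; case: (gl s h) => [[b g]|]; [apply: h1 | apply: h0]. Qed.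

Lemma Wb_sum_le1 s (sMax : s \in Max) sg (hsg : vmax sg) :
  \sum_(b | Ex s b) Wb s sg b <= 1.
Proof.
pose F b := fun x => PfA sg [::] (Hb s b x ++ [::]).
have admF b : Ex s b -> @adm _ (fun _ => sg) (Hb s b) (F b).
  by move=> _; apply: (@adm_P _ (fun _ => sg) (Hb s b)) => _; exact: hsg.
have E : \sum_(b | Ex s b) Wb s sg b = \sum_(b | Ex s b) 1 * sup (range (PS s (F b))).
  by apply: eq_bigr => b _; rewrite mul1r.
rewrite E -lsup_sum //; last first.
- by move=> b Eb; apply: (admb_bnd sMax hsg Eb (admF b Eb)).
- by move=> b Eb; apply: (admb_ndec (admF b Eb)).
apply: lsup_le => K; apply: le_trans (es_le1 sMax hsg K).
rewrite /PS; under eq_bigr do rewrite mul1r.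
rewrite exchange_big /=; apply: ler_sum => t _; rewrite exchange_big /=.
rewrite /es le_eqVlt; apply/orP; left; apply/eqP.
by apply: eq_allseq => x /all_filterP ax; apply: eq_bigr => b _; rewrite /F /Hb ax cats0.
Qed.

Section Main.
Variable HAv : forall s, exists a, a \in Av s.
Local Notation d0 := (dstrat HAv).
Lemma d0max : vmax d0. Proof. exact: dstrat_ok. Qed.
Lemma d0min : vmin d0. Proof. exact: dstrat_ok. Qed.


Definition YS s sg b (T : {set S}) s' : set R :=
  [set r | exists2 t, vmin t & r = rp (xib s sg b) t T s'].

Section YSp.
Variables (s : S) (sMax : s \in Max) (sg : strat) (hsg : vmax sg) (b : A) (Eb : Ex s b)
  (T : {set S}) (s' : S).

Lemma YS_ne : YS s sg b T s' !=set0.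
Proof. by exists (rp (xib s sg b) d0 T s'); exists d0 => //; exact: d0min. Qed.

Lemma YS_lb : lbound (YS s sg b T s') 0.
Proof. by move=> _ [t ht ->]; apply: rp_ge0 => //; exact: xib_vmax. Qed.

Lemma Y_ge0 : 0 <= inf (YS s sg b T s').
Proof. by apply: lb_le_inf; [exact: YS_ne | exact: YS_lb]. Qed.

Lemma Y_le t : vmin t -> inf (YS s sg b T s') <= rp (xib s sg b) t T s'.
Proof. by move=> ht; apply: ge_inf; [exists 0; exact: YS_lb | exists t]. Qed.

Lemma Y_le1 : inf (YS s sg b T s') <= 1.
Proof. by apply: le_trans (Y_le d0min) _; apply: rp_le1; [exact: xib_vmax | exact: d0min]. Qed.

End YSp.

Lemma key_sup s (sMax : s \in Max) sg (hsg : vmax sg) (T : {set S}) v :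
  s \notin T -> (forall tau, vmin tau -> v <= rp sg tau T s) ->
  v <= \sum_(b | Ex s b) Wb s sg b * \sum_s' delta s b s' * inf (YS s sg b T s').
Proof.
move=> sT hv; apply/ler_addgt0Pr => e e0.
have hch (p : A * S) : exists t, vmin t /\
    rp (xib s sg p.1) t T p.2 < inf (YS s sg p.1 T p.2) + e.
  have ne : YS s sg p.1 T p.2 !=set0.
    by exists (rp (xib s sg p.1) d0 T p.2); exists d0 => //; exact: d0min.
  have lt0 : inf (YS s sg p.1 T p.2) < inf (YS s sg p.1 T p.2) + e by rewrite ltrDl.
  have [y [t ht ->] lt] := inf_lt ne lt0.
  by exists t.
have [tt htt] := choice hch.
pose tb b : strat := fun g c => tt (b, fs g c) g c.
have htb b : vmin (tb b) by move=> g c hc; exact: (proj1 (htt (b, fs g c))).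
pose tau := glue s tb d0.
have htau : vmin tau := glue_vmin s htb d0min.
apply: le_trans (hv tau htau) _.
apply: lsup_le => K.
apply: le_trans (loop_bound sMax hsg htau sT K) _.
apply: le_trans (_ : \sum_(b | Ex s b) \sum_s' delta s b s' *
   (Wb s sg b * (inf (YS s sg b T s') + e)) <= _); last first.
  have -> : \sum_(b | Ex s b) \sum_s' delta s b s' * (Wb s sg b * (inf (YS s sg b T s') + e)) =
     \sum_(b | Ex s b) Wb s sg b * \sum_s' delta s b s' * inf (YS s sg b T s') +
     e * \sum_(b | Ex s b) Wb s sg b.
    rewrite mulr_sumr -big_split; apply: eq_bigr => b Eb.
    have [_ d1] := Hdelta (Ex_Av Eb).
    transitivity (\sum_s' (Wb s sg b * (delta s b s' * inf (YS s sg b T s')) +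
                             (e * Wb s sg b) * delta s b s')).
      by apply: eq_bigr => s' _; ring.
    by rewrite big_split /= -!mulr_sumr d1 mulr1.
  rewrite lerD2l -[X in _ <= X]mulr1 (ler_wpM2l (ltW e0)) //.
  exact: Wb_sum_le1.
apply: ler_sum => b Eb; apply: ler_sum => s' _.
have [d0' _] := Hdelta (Ex_Av Eb).
rewrite ler_wpM2l //.
have kb := @kuhn_b s sMax sg hsg b Eb tau (tb b) T K s' htau (htb b).
apply: le_trans (kb _) _.
  by move=> x g; rewrite /tau /glue gl_Hb.
rewrite ler_wpM2l ?(Wb_ge0 sMax hsg Eb) //.
have -> : reach (xib s sg b) (tb b) T K [::] s' = reach (xib s sg b) (tt (b, s')) T K [::] s'.
  by apply: (reach_agree (s0 := s')) => // g c hf; rewrite /tb hf.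
apply: le_trans (reach_le_rp _ _ _ _ _) _.
- exact: xib_vmax.
- exact: (proj1 (htt (b, s'))).
- exact: ltW (proj2 (htt (b, s'))).
Qed.

Lemma conv_fin n (X : set (vec R n)) (P : pred A) (w : A -> R) (p : A -> vec R n) :
  X (fun _ => 0) -> (forall b, P b -> X (p b)) -> (forall b, P b -> 0 <= w b) ->
  \sum_(b | P b) w b <= 1 ->
  conv X (fun i => \sum_(b | P b) w b * p b i).
Proof.
move=> X0 pX w0 w1.
pose W b := if P b then w b else 0.
pose pp b := if P b then p b else (fun _ : 'I_n => 0).
have eW : \sum_(b | P b) w b = \sum_b W b by rewrite big_mkcond.
exists #|A|.+1, (fun j => if unlift ord0 j is Some k then W (enum_val k) else 1 - \sum_(b | P b) w b),
  (fun j => if unlift ord0 j is Some k then pp (enum_val k) else (fun _ => 0)).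
split.
  move=> j; case: (unlift ord0 j) => [k|]; last by rewrite subr_ge0.
  by rewrite /W; case: ifP => // Pk; apply: w0.
split.
  rewrite big_ord_recl unlift_none.
  have -> : \sum_(k < #|A|) (if unlift ord0 (lift ord0 k) is Some k' then W (enum_val k')
      else 1 - \sum_(b | P b) w b) = \sum_(k < #|A|) W (enum_val k).
    by apply: eq_bigr => k _; rewrite (liftK ord0 k).
  by rewrite -(big_enum_val (A := A)) -eW subrK.
split.
  by move=> j; case: (unlift ord0 j) => [k|] //; rewrite /pp; case: ifP => // Pk; apply: pX.
apply: funext => i; rewrite big_ord_recl unlift_none mulr0 add0r.
have -> : \sum_(k < #|A|) (if unlift ord0 (lift ord0 k) is Some k' then W (enum_val k')
      else 1 - \sum_(b | P b) w b) * (if unlift ord0 (lift ord0 k) is Some k' then pp (enum_val k')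
      else (fun _ => 0)) i = \sum_(k < #|A|) W (enum_val k) * pp (enum_val k) i.
  by apply: eq_bigr => k _; rewrite (liftK ord0 k).
rewrite -(big_enum_val (A := A) (fun b => W b * pp b i)) big_mkcond /=.
by apply: eq_bigr => b _; rewrite /W /pp; case: ifP => //; rewrite mul0r.
Qed.

End Main.

Section Final.
Variable HAv : forall s, exists a, a \in Av s.
Local Notation d0 := (dstrat HAv).
Variables (n : nat) (Tobj : 'I_n -> {set S}) (s : S).
Hypothesis sMax : s \in Max.
Local Notation Ach := (achievable Max Av delta Tobj).
Local Notation EU := (exit_union Max Av delta Tobj Ach [set s]).

Lemma ach_zero s' : Ach s' (fun _ => 0).
Proof.
split => // ; exists d0; split; first exact: d0max.
by move=> tau ht i; apply: rp_ge0 => //; exact: d0max.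
Qed.

Lemma ind_ge0 s0 i : 0 <= ind_obj R Tobj s0 i.
Proof. by rewrite /ind_obj; case: ifP; rewrite ?ler01 ?lexx. Qed.

Lemma unit_box0 : unit_box (fun _ : 'I_n => (0 : R)).
Proof. by split => // ; exists (fun _ => 1) => // i; rewrite ler01. Qed.

Lemma fact0 s0 a : f_act delta Tobj Ach s0 a (fun _ => 0).
Proof.
split; last exact: unit_box0.
exists (fun _ => 0), (fun _ => 0); split.
  by split => //; exists (ind_obj R Tobj s0) => // i; exact: ind_ge0.
split; last by apply: funext => i; rewrite addr0.
exists (fun _ _ => 0); split; first by move=> s'; exact: ach_zero.
by apply: funext => i; rewrite big1 // => s' _; rewrite mulr0.
Qed.

Lemma EU0 : EU (fun _ => 0).
Proof.
rewrite /exit_union; case: ifP => // /existsP [s0 /existsP [a /andP [ex s0M]]].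
by exists s0, a; split => //; split => //; exact: fact0.
Qed.

Lemma dir2 v : Ach s v -> best_exit Max Av delta Tobj Ach [set s] v.
Proof.
case=> v0 [sg [hsg hv]].
have v1 i : v i <= 1.
  apply: le_trans (hv d0 (d0min HAv) i) _; apply: rp_le1 => //; exact: d0min.
pose C i := \sum_(b | Ex s b) Wb s sg b * \sum_s' delta s b s' * inf (YS s sg b (Tobj i) s').
have vC i : s \notin Tobj i -> v i <= C i.
  by move=> sT; apply: (key_sup HAv sMax hsg sT) => tau ht; exact: hv.
have C0 i : 0 <= C i.
  apply: sumr_ge0 => b Eb; rewrite mulr_ge0 ?(Wb_ge0 sMax hsg Eb) //.
  apply: sumr_ge0 => s' _; rewrite mulr_ge0 ?(Y_ge0 HAv sMax hsg Eb) //.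
  by case: (Hdelta (Ex_Av Eb)).
pose t i := if s \in Tobj i then 0 else (if C i == 0 then 0 else v i / C i).
have t01 i : 0 <= t i <= 1.
  rewrite /t; case: ifP => sT; first by rewrite lexx ler01.
  case: eqP => Ci; first by rewrite lexx ler01.
  have Cp : 0 < C i by rewrite lt_def C0 andbT; apply/eqP.
  by rewrite divr_ge0 ?C0 //= ler_pdivrMr // mul1r vC ?sT.
have tC i : s \notin Tobj i -> t i * C i = v i.
  move=> sT; rewrite /t (negbTE sT); case: eqP => Ci.
    by rewrite mul0r; apply/eqP; rewrite eq_le v0 /= -Ci (vC i sT).
  by rewrite divfK //; apply/eqP.
pose y b s' : vec R n := fun i => t i * inf (YS s sg b (Tobj i) s').
have yA b s' : Ex s b -> Ach s' (y b s').
  move=> Eb; split.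
    by move=> i; rewrite mulr_ge0 ?(Y_ge0 HAv sMax hsg Eb) //; case/andP: (t01 i).
  exists (xib s sg b); split; first exact: (xib_vmax sMax hsg Eb).
  move=> tau ht i; apply: (le_trans _ (Y_le sMax hsg Eb (Tobj i) s' ht)).
  case/andP: (t01 i) => t0 t1; rewrite -[X in _ <= X]mul1r ler_wpM2r //.
  exact: (Y_ge0 HAv sMax hsg Eb).
pose p b : vec R n := fun i => \sum_s' delta s b s' * y b s' i.
have pX b : Ex s b -> EU (p b).
  move=> Eb; rewrite /exit_union ifT; last first.
    by apply/existsP; exists s; apply/existsP; exists b; apply/andP; split.
  exists s, b; split => //; split => //; split.
    exists (fun _ => 0), (p b); split.
      by split => //; exists (ind_obj R Tobj s) => // i; exact: ind_ge0.
    split; last by apply: funext => i; rewrite add0r.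
    by exists (y b); split => // s'; exact: yA.
  have [dd0 dd1] := Hdelta (Ex_Av Eb).
  split.
    move=> i; apply: sumr_ge0 => s' _; rewrite mulr_ge0 //.
    by case: (yA b s' Eb) => h _; exact: h.
  exists (fun _ => 1) => // i; rewrite -dd1; apply: ler_sum => s' _.
  rewrite -[X in _ <= X]mulr1 ler_wpM2l // /y.
  case/andP: (t01 i) => t0 t1; apply: mulr_ile1 => //.
  - exact: (Y_ge0 HAv sMax hsg Eb).
  - exact: (Y_le1 HAv sMax hsg Eb).
pose c : vec R n := fun i => \sum_(b | Ex s b) Wb s sg b * p b i.
have cX : conv EU c.
  apply: conv_fin => //; first exact: EU0.
  - by move=> b Eb; apply: (Wb_ge0 sMax hsg Eb).
  - exact: (Wb_sum_le1 sMax hsg).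
have cval i : c i = if s \in Tobj i then 0 else v i.
  have -> : c i = t i * C i.
    rewrite /c /C mulr_sumr; apply: eq_bigr => b Eb.
    rewrite /p /y mulrCA; congr (_ * _); rewrite mulr_sumr; apply: eq_bigr => s' _; ring.
  case: ifP => sT; first by rewrite /t sT mul0r.
  by rewrite tC // sT.
split; last by split => //; exists (fun _ => 1).
exists (fun i => v i - c i), c; split; last first.
  by split => //; apply: funext => i; rewrite subrK.
split.
  by move=> i; rewrite cval; case: ifP => _; rewrite ?subr0 ?subrr.
exists (fun i => \sum_(s0 in [set s]%SET) ind_obj R Tobj s0 i) => // i.
rewrite big_set1 cval /ind_obj; case: ifP => _; first by rewrite subr0.
by rewrite subrr.
Qed.

Lemma pick_one (a : A) (F : A -> R) : \sum_b (b == a)%:R * F b = F a.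
Proof.
by rewrite (bigD1 a) //= eqxx mul1r big1 ?addr0 // => b /negbTE ->; rewrite mul0r.
Qed.

Lemma dir1 v : best_exit Max Av delta Tobj Ach [set s] v -> Ach s v.
Proof.
case=> [[x [y [hx [hy ev]]]] [v0 [_ -> v1]]].
case: hx => x0 [_ -> xle].
have xle' i : x i <= ind_obj R Tobj s i by have := xle i; rewrite big_set1.
case: hy => m [w [p [w0 [w1 [pX ey]]]]].
have xz i : s \notin Tobj i -> x i = 0.
  move=> sT; apply/eqP; rewrite eq_le x0 andbT; have := xle' i; by rewrite /ind_obj (negbTE sT).
have vT i tau sg : vmax sg -> vmin tau -> s \in Tobj i -> v i <= rp sg tau (Tobj i) s.
  by move=> hs ht sT; rewrite rp_in // v1.
split => //.
move: pX; rewrite /exit_union; case: ifP => hex pX.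
  have hq j : exists q : A * (S -> vec R n) * (S -> strat),
      [/\ q.1.1 \in Av s, forall s', vmax (q.2 s'),
       forall s' tau i, vmin tau -> q.1.2 s' i <= rp (q.2 s') tau (Tobj i) s' &
       forall i, s \notin Tobj i -> p j i = \sum_s' delta s q.1.1 s' * q.1.2 s' i].
    case: (pX j) => s0 [a [ex [_ hf]]].
    have es0 : s0 = s by case/and3P: ex => /set1P.
    subst s0.
    case: hf => [[d [z [hd [hz ->]]]] _]; case: hz => yv [hyA ->].
    have hth s' : exists th, vmax th /\ forall tau i, vmin tau -> yv s' i <= rp th tau (Tobj i) s'.
      case: (hyA s') => _ [th [hth h]]; exists th; split => // tau i ht; exact: h.
    have [th hth'] := choice hth.
    exists (a, yv, th); split => /=.
    - by case/and3P: ex.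
    - by move=> s'; case: (hth' s').
    - by move=> s' tau i ht; case: (hth' s') => _ h; exact: h.
    - move=> i sT; case: hd => dd0 [_ -> dle].
      have -> : d i = 0.
        by apply/eqP; rewrite eq_le dd0 andbT; have := dle i; rewrite /ind_obj (negbTE sT).
      by rewrite add0r.
  have [qq hqq] := choice hq.
  pose a j := (qq j).1.1.
  pose th j := (qq j).2.
  have aAv j : a j \in Av s by case: (hqq j).
  have thv j s' : vmax (th j s') by case: (hqq j) => _ h _ _; exact: h.
  pose rho j : strat := fun g c => if g is _ :: g' then th j (fs g' c) g' c
    else (if c == s then (fun b => (b == a j)%:R) else d0 [::] c).
  have hrho j : vmax (rho j).
    move=> g c cM; case: g => [|[c0 b0] g'] /=; last by apply: (thv j (fs g' c)).
    case: eqP => [ec|_]; last by apply: (d0max HAv).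
    split; first by move=> b; rewrite ler0n.
    split; first by move=> b bA; case: eqP => // eb; move: bA; rewrite eb ec (aAv j).
    by rewrite (bigD1 (a j)) //= eqxx big1 ?addr0 // => b /negbTE ->.
  have [xi [hxi hmix]] := mix_fin w0 w1 hrho (d0max HAv).
  exists xi; split => //.
  move=> tau ht i; have [sT|sT] := boolP (s \in Tobj i); first exact: vT.
  pose u j s' k := reach (th j s') (shift [:: (s, a j)] tau) (Tobj i) k [::] s'.
  have un (q : 'I_m * S) : ndec (u q.1 q.2).
    by move=> k; apply: reach_ndec; [exact: thv | exact: shift_vmin].
  have ub (q : 'I_m * S) : bnd (u q.1 q.2).
    by exists 1 => k; apply: reach_le1; [exact: thv | exact: shift_vmin].
  pose cf j s' := w j * delta s (a j) s'.
  have cf0 (q : 'I_m * S) : 0 <= cf q.1 q.2 by rewrite mulr_ge0 //; case: (Hdelta (aAv q.1)).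
  have step k : reach xi tau (Tobj i) k.+1 [::] s =
      \sum_(q | true && true) cf q.1 q.2 * u q.1 q.2 k.
    rewrite hmix // -(pair_big xpredT xpredT (fun j s' => cf j s' * u j s' k)).
    apply: eq_bigr => j _; rewrite reachS (negbTE sT).
    rewrite (eq_bigr (fun b => (b == a j)%:R * \sum_s' delta s b s' *
        reach (rho j) tau (Tobj i) k [:: (s, b)] s')); last first.
      by move=> b _; rewrite /wt sMax /= eqxx.
    rewrite pick_one mulr_sumr; apply: eq_bigr => s' _.
    rewrite /cf /u -mulrA; congr (_ * (_ * _)).
    rewrite (reach_shift (rho j) tau (Tobj i) k [:: (s, a j)] [::] s').
    by apply: (reach_agree (s0 := s')) => // g c hf; rewrite /shift /= hf.
  rewrite ev ey /= xz // add0r.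
  apply: le_trans (_ : \sum_(q | true && true) cf q.1 q.2 * sup (range (u q.1 q.2)) <= _).
    rewrite -(pair_big xpredT xpredT (fun j s' => cf j s' * sup (range (u j s')))).
    apply: ler_sum => j _; case: (hqq j) => _ _ hle hp; rewrite (hp i sT).
    rewrite mulr_sumr; apply: ler_sum => s' _; rewrite /cf -mulrA.
    have dpos : 0 <= delta s (qq j).1.1 s' by exact: (proj1 (Hdelta (aAv j)) s').
    rewrite /a (ler_wpM2l (w0 j)) //; rewrite (ler_wpM2l dpos) //.
    exact: (hle s' (shift [:: (s, a j)] tau) i (shift_vmin _ ht)).
  rewrite -(@lsup_sum R _ (index_enum _) (fun q => true && true) (fun q => cf q.1 q.2) (fun q => u q.1 q.2)) //.
  apply: lsup_le => k; rewrite -step.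
  exact: reach_le_rp.
exists d0; split; first exact: d0max.
move=> tau ht i; have [sT|sT] := boolP (s \in Tobj i); first by apply: vT => //; exact: d0max.
rewrite ev ey /= xz // add0r big1; first by apply: rp_ge0 => //; exact: d0max.
by move=> j _; rewrite (pX j) mulr0.
Qed.

End Final.
End Game.

Unset Implicit Arguments.
Set Strict Implicit.

Theorem lemmaA1 (R : realType) (S A : finType) (Max : {set S})
  (Av : S -> {set A}) (delta : S -> A -> S -> R) (n : nat)
  (Tobj : 'I_n -> {set S})
  (HAv : forall s, exists a, a \in Av s)
  (Hdelta : forall s a, a \in Av s ->
     (forall s', 0 <= delta s a s') /\ \sum_s' delta s a s' = 1)
  (s : S) :
  s \in Max ->
  best_exit Max Av delta Tobj (achievable Max Av delta Tobj) [set s]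
  = achievable Max Av delta Tobj s.
Proof.
move=> sMax; apply/seteqP; split => v.
  exact: (dir1 Hdelta HAv sMax).
exact: (dir2 Hdelta HAv sMax).
Qed.
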